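(* Let $\mathcal{A}\in\mathbb{C}^{n\times n\times n\times n}$ be a CPS tensor. Then $\langle X,\mathcal{A}X\rangle\ge0$ for all Hermitian positive semidefinite $X\in\mathbb{C}^{n\times n}$ if and only if $\langle X,\mathcal{A}X\rangle\ge0$ for all real symmetric positive semidefinite $X\in\mathbb{R}^{n\times n}$.
   Context: A tensor $\mathcal{A}\in\mathbb{C}^{n\times n\times n\times n}$ is conjugate partial-symmetric (CPS) if $\mathcal{A}_{ijkl}=\overline{\mathcal{A}_{klij}}$ and $\mathcal{A}_{ijkl}=\mathcal{A}_{jikl}=\mathcal{A}_{ijlk}$ for all indices. For $X\in\mathbb{C}^{n\times n}$, $\langle X,\mathcal{A}X\rangle=\sum_{i,j,k,l}\mathcal{A}_{ijkl}X_{kl}\overline{X_{ij}}$. *)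

(* Defs.v *)
From HB Require Import structures.
From mathcomp Require Import all_boot all_order all_algebra.
From mathcomp Require Import complex.
From mathcomp Require Import reals.
Set Implicit Arguments. Unset Strict Implicit. Unset Printing Implicit Defensive.
Import Order.TTheory GRing.Theory Num.Theory.
Local Open Scope ring_scope.

Definition tensor4 (C : Type) (n : nat) := 'I_n -> 'I_n -> 'I_n -> 'I_n -> C.

Definition CPS (R : realType) (n : nat) (A : tensor4 R[i] n) : Prop :=
  (forall i j k l, A i j k l = (A k l i j)^*) /\
  (forall i j k l, A i j k l = A j i k l) /\
  (forall i j k l, A i j k l = A i j l k).

Definition tform (R : realType) (n : nat) (A : tensor4 R[i] n)
    (X : 'M[R[i]]_n) : R[i] :=
  \sum_(i < n) \sum_(j < n) \sum_(k < n) \sum_(l < n)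
     A i j k l * X k l * (X i j)^*.

Definition ctrmx (R : realType) (m n : nat) (M : 'M[R[i]]_(m, n)) : 'M[R[i]]_(n, m) :=
  (map_mx Num.conj M)^T.

Definition herm_psd (R : realType) (n : nat) (X : 'M[R[i]]_n) : Prop :=
  ctrmx X = X /\ forall v : 'cV[R[i]]_n, 0 <= (ctrmx v *m X *m v) 0 0.

Definition sym_psd (R : realType) (n : nat) (X : 'M[R]_n) : Prop :=
  X^T = X /\ forall v : 'cV[R]_n, 0 <= (v^T *m X *m v) 0 0.

Definition cmx (R : realType) (m n : nat) (X : 'M[R]_(m, n)) : 'M[R[i]]_(m, n) :=
  map_mx (fun x : R => (x%:C)%C) X.

(* Main.v *)
Require Import Defs.
From HB Require Import structures.
From mathcomp Require Import all_boot all_order all_algebra.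
From mathcomp Require Import complex.
From mathcomp Require Import reals.
From mathcomp Require Import ring.
Import Order.TTheory GRing.Theory Num.Theory.
Local Open Scope ring_scope.

Section Helpers.
Variable R : realType.
Local Notation cRe := (@complex.Re R).
Local Notation cIm := (@complex.Im R).

Lemma ReJ (z : R[i]) : cRe (z^*) = cRe z.
Proof. by case: z. Qed.

Lemma half_conj (z : R[i]) : (z + z^*) / 2%:R = (cRe z)%:C%C.
Proof. by rewrite ReJ_add. Qed.

Lemma conj_real (x : R) : ((x%:C)%C)^* = (x%:C)%C.
Proof. exact: conjc_real. Qed.

Lemma cross2' (z w : R[i]) :
  z^* * w + w^* * z = (((cRe z * cRe w + cIm z * cIm w) * 2%:R) +i* 0)%C.
Proof.
case: z => a b; case: w => c d.
rewrite [_^*]/= [w in _ + w^* * _]/=.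
simpc. rewrite /=. congr (Complex _ _); ring.
Qed.

Lemma cross2 (z w : R[i]) :
  (z^* * w + w^* * z) / 2%:R = ((cRe z * cRe w + cIm z * cIm w))%:C%C.
Proof.
rewrite cross2' -complexr0.
have -> : ((cRe z * cRe w + cIm z * cIm w) * 2%:R +i* 0)%C =
   ((cRe z * cRe w + cIm z * cIm w)%:C)%C * 2%:R.
  by rewrite complexr0 rmorphM rmorph_nat.
by rewrite mulfK ?pnatr_eq0.
Qed.

Lemma symz n (F M : 'I_n -> 'I_n -> R[i]) : (forall i j, F i j = F j i) ->
  \sum_i \sum_j F i j * M i j = \sum_i \sum_j F i j * ((M i j + M j i) / 2%:R).
Proof.
move=> FS.
have E : \sum_i \sum_j F i j * M j i = \sum_i \sum_j F i j * M i j.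
  by rewrite exchange_big; apply eq_bigr=> i _; apply eq_bigr=> j _; rewrite FS.
have -> : \sum_i \sum_j F i j * ((M i j + M j i) / 2%:R) =
   (\sum_i \sum_j F i j * M i j + \sum_i \sum_j F i j * M j i) / 2%:R.
  rewrite -big_split mulr_suml; apply eq_bigr=> i _.
  rewrite -big_split mulr_suml; apply eq_bigr=> j _ /=; ring.
by rewrite E; field.
Qed.

Lemma quad_c n (X : 'M[R[i]]_n) (v : 'cV[R[i]]_n) :
  (ctrmx v *m X *m v) 0 0 = \sum_i \sum_j ((v i 0)^* * v j 0) * X i j.
Proof.
rewrite mxE.
under eq_bigr => j _ do rewrite mxE big_distrl /=.
rewrite exchange_big; apply eq_bigr=> i _; apply eq_bigr => j _.
rewrite /ctrmx !mxE; ring.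
Qed.

Lemma quad_r n (X : 'M[R]_n) (v : 'cV[R]_n) :
  (v^T *m X *m v) 0 0 = \sum_i \sum_j (v i 0 * v j 0) * X i j.
Proof.
rewrite mxE.
under eq_bigr => j _ do rewrite mxE big_distrl /=.
rewrite exchange_big; apply eq_bigr=> i _; apply eq_bigr => j _.
rewrite !mxE; ring.
Qed.

Lemma tformE n (A : tensor4 R[i] n) X :
  tform A X = \sum_i \sum_j (\sum_k \sum_l A i j k l * X k l) * (X i j)^*.
Proof.
rewrite /tform; apply eq_bigr => i _; apply eq_bigr => j _.
rewrite mulr_suml; apply eq_bigr => k _; by rewrite mulr_suml.
Qed.

End Helpers.

Theorem corollary5p4 (R : realType) (n : nat) (A : tensor4 R[i] n) :
  CPS A ->
  ((forall X : 'M[R[i]]_n, herm_psd X -> 0 <= tform A X) <->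
   (forall X : 'M[R]_n, sym_psd X -> 0 <= tform A (cmx X))).
Proof.
move=> [_ [S12 S34]].
split.
- move=> H Y [YT Ypsd]; apply: H; split.
  + apply/matrixP => i j; rewrite /ctrmx !mxE /= conj_real.
    by move/matrixP: YT => /(_ j i); rewrite mxE => ->.
  + have YS i j : Y i j = Y j i.
      by move/matrixP: YT => /(_ j i); rewrite mxE.
    move=> v; rewrite quad_c.
    have -> : \sum_i \sum_j ((v i 0)^* * v j 0) * cmx Y i j =
        \sum_i \sum_j ((Y i j)%:C)%C * (((v i 0)^* * v j 0 + (v j 0)^* * v i 0) / 2%:R).
      rewrite -(@symz _ _ (fun i j => ((Y i j)%:C)%C) (fun i j => (v i 0)^* * v j 0)); last by move=> i j; rewrite YS.
      by apply eq_bigr => i _; apply eq_bigr => j _; rewrite !mxE /= mulrC.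
    under eq_bigr => i _ do under eq_bigr => j _ do rewrite cross2 -rmorphM.
    under eq_bigr => i _ do rewrite -(rmorph_sum (real_complex R)).
    rewrite -(rmorph_sum (real_complex R)) ler0c.
    have := Ypsd (map_mx (@complex.Re R) v); have := Ypsd (map_mx (@complex.Im R) v).
    rewrite !quad_r => Hb Ha.
    have -> : \sum_i \sum_j Y i j *
        (complex.Re (v i 0) * complex.Re (v j 0) + complex.Im (v i 0) * complex.Im (v j 0)) =
      \sum_i \sum_j (map_mx (@complex.Re R) v i 0 * map_mx (@complex.Re R) v j 0) * Y i j +
      \sum_i \sum_j (map_mx (@complex.Im R) v i 0 * map_mx (@complex.Im R) v j 0) * Y i j.
      rewrite -big_split; apply eq_bigr => i _; rewrite -big_split; apply eq_bigr => j _.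
      rewrite !mxE /=; ring.
    exact: addr_ge0.
- move=> H X [XH Xpsd].
  have XC i j : X j i = (X i j)^*.
    by move/matrixP: XH => /(_ j i); rewrite /ctrmx !mxE => <-.
  set Y := map_mx (@complex.Re R) X.
  have YS i j : Y i j = Y j i by rewrite !mxE [X j i]XC ReJ.
  have -> : tform A X = tform A (cmx Y).
    rewrite !tformE.
    rewrite (@symz _ _ (fun i j => \sum_k \sum_l A i j k l * X k l) (fun i j => (X i j)^*)); last first.
      by move=> i j; apply eq_bigr=> k _; apply eq_bigr => l _; rewrite S12.
    rewrite (@symz _ _ (fun i j => \sum_k \sum_l A i j k l * cmx Y k l) (fun i j => (cmx Y i j)^*)); last first.
      by move=> i j; apply eq_bigr=> k _; apply eq_bigr => l _; rewrite S12.
    apply eq_bigr => i _; apply eq_bigr => j _ /=; congr (_ * _).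
    + rewrite (@symz _ _ (fun k l => A i j k l) (X)); last by move=> k l; rewrite S34.
      rewrite (@symz _ _ (fun k l => A i j k l) (cmx Y)); last by move=> k l; rewrite S34.
      apply eq_bigr => k _; apply eq_bigr => l _; congr (_ * _).
      rewrite !mxE /= [X l k]XC half_conj ReJ.
      by field.
    + rewrite !mxE /= [X j i]XC conjCK !conj_real ReJ addrC half_conj.
      by field.
  apply: H; split.
  + by apply/matrixP => i j; rewrite mxE YS.
  + move=> v; have := Xpsd (cmx v); rewrite quad_c quad_r.
    have -> : \sum_i \sum_j ((cmx v i 0)^* * cmx v j 0) * X i j =
        ((\sum_i \sum_j (v i 0 * v j 0) * Y i j)%:C)%C.
      rewrite (@symz _ _ (fun i j => (cmx v i 0)^* * cmx v j 0) (X)); last first.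
        by move=> i j; rewrite !mxE /= !conj_real mulrC.
      rewrite rmorph_sum; apply eq_bigr => i _; rewrite rmorph_sum; apply eq_bigr => j _.
      by rewrite [X j i]XC half_conj !mxE /= conj_real !rmorphM.
    by rewrite ler0c.
Qed.
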